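(* Assume (B1)–(B3), that $f\in C^2$, that $\int_0^{+\infty}e^{-f(s)/(\beta+1)}ds<\infty$, and that $\lim_{t\to+\infty}g''(t)/g'(t)=0$ where $g=f^{-1}$. Then $I(u(\varepsilon_\rho s,\rho))\to\beta+1$ as $\rho\to+\infty$, uniformly for $s$ in compact subsets of $[0,\infty)$.
   Context: $L(u)(r)=r^{-\gamma}(r^{\alpha}|u'|^{\beta}u')'$, $\theta=\gamma+2+\beta-\alpha$. (B1) $f\in C^1(\mathbb R,\mathbb R)$, $f'>0$, $f\to+\infty$. (B2) $\lim_{u\to+\infty}u^{-1}e^{f(u)/(\beta+1)}=\lim_{u\to+\infty}uf'(u)=+\infty$. (B3) $\alpha>\beta+1>0$, $\theta>0$. $u(\cdot,\rho)$: solution on $[0,\infty)$ of $L(u)+e^{f(u)}=0$, $u(0)=\rho$, $u'(0)=0$. $\mathcal F(u)=\int_u^{\infty}e^{-f(s)/(\beta+1)}ds$, $\mathcal F_1(u)=(\beta+1)e^{-u/(\beta+1)}$, $\varepsilon_\rho=(\mathcal F(\rho)/\mathcal F_1(1))^{(\beta+1)/\theta}$, $I(u)=\mathcal F(u)f'(u)e^{f(u)/(\beta+1)}$. *)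

(* Defs.v *)
From Stdlib Require Import Reals.
From Coquelicot Require Import Coquelicot.
Open Scope R_scope.

Definition phi (beta x : R) : R :=
  if Req_EM_T x 0 then 0 else Rpower (Rabs x) beta * x.

Definition theta (alpha beta gamma : R) : R := gamma + 2 + beta - alpha.

(* u is a solution on [0,oo) of  r^{-gamma} (r^alpha |u'|^beta u')' + e^{f(u)} = 0,
   u(0) = rho, u'(0) = 0.  (u is C^1 on [0,oo), r^alpha|u'|^beta u' is
   differentiable on (0,oo) and the equation holds there.) *)
Definition is_solution (alpha beta gamma : R) (f : R -> R) (rho : R) (u : R -> R) : Prop :=
  u 0 = rho /\
  filterlim u (at_right 0) (locally rho) /\
  (forall r, 0 < r -> ex_derive u r) /\
  filterlim (Derive u) (at_right 0) (locally 0) /\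
  (forall r, 0 < r ->
     is_derive (fun t => Rpower t alpha * phi beta (Derive u t)) r
               (- (Rpower r gamma * exp (f (u r))))).

Definition Fint (beta : R) (f : R -> R) (s : R) : R := exp (- f s / (beta + 1)).

Definition Fcal (beta : R) (f : R -> R) (u : R) : R :=
  RInt_gen (Fint beta f) (at_point u) (Rbar_locally p_infty).

Definition Fcal1 (beta : R) (u : R) : R := (beta + 1) * exp (- u / (beta + 1)).

Definition eps_rho (alpha beta gamma : R) (f : R -> R) (rho : R) : R :=
  Rpower (Fcal beta f rho / Fcal1 beta 1) ((beta + 1) / theta alpha beta gamma).

Definition Ical (beta : R) (f : R -> R) (u : R) : R :=
  Fcal beta f u * Derive f u * exp (f u / (beta + 1)).

(* Main.v *)
Require Import Defs.
From Stdlib Require Import Reals Lra.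
From Coquelicot Require Import Coquelicot.
Open Scope R_scope.

Definition hh (beta : R) (f : R -> R) (x : R) := exp (- f x / (beta + 1)) / Derive f x.

Lemma hh_deriv beta f x : 0 < beta + 1 -> ex_derive f x -> ex_derive (Derive f) x -> 0 < Derive f x ->
  is_derive (hh beta f) x (- Fint beta f x * (/(beta+1) + Derive (Derive f) x / (Derive f x)^2)).
Proof.
  intros Hb H1 H2 Hp. unfold hh, Fint.
  auto_derive.
  - repeat split; auto. lra.
  - change (fun x0 : R => f x0) with f. change (fun x0 : R => Derive f x0) with (Derive f). unfold Rdiv. field. split; lra.
Qed.

Lemma ballR (x e y : R) : ball x e y <-> Rabs (y - x) < e.
Proof. reflexivity. Qed.

Lemma cont_pt (h : R -> R) x : ex_derive h x -> continuity_pt h x.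
Proof. intro H. apply continuity_pt_filterlim. apply (ex_derive_continuous h x H). Qed.

Lemma hh_expr_cont beta f x : ex_derive f x -> ex_derive (Derive f) x -> 0 < Derive f x ->
  continuous (Derive (Derive f)) x ->
  continuity_pt (fun x => - Fint beta f x * (/(beta+1) + Derive (Derive f) x / (Derive f x)^2)) x.
Proof.
  intros H1 H2 Hp H3. unfold Fint.
  apply continuity_pt_mult.
  - apply continuity_pt_opp.
    apply (continuity_pt_comp (fun x => - f x / (beta+1)) exp).
    + unfold Rdiv. apply continuity_pt_mult. apply continuity_pt_opp. now apply cont_pt.
      apply continuity_pt_const. intros a b; reflexivity.
    + apply derivable_continuous_pt, derivable_pt_exp.
  - apply continuity_pt_plus. apply continuity_pt_const. intros a b; reflexivity.
    apply continuity_pt_div.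
    + now apply continuity_pt_filterlim.
    + apply (continuity_pt_comp (Derive f) (fun y => y^2)). now apply cont_pt.
      apply derivable_continuous_pt, derivable_pt_pow.
    + apply pow_nonzero. lra.
Qed.

Lemma Fint_cont beta f x : ex_derive f x -> continuous (Fint beta f) x.
Proof.
  intro H. apply continuity_pt_filterlim. unfold Fint.
  apply (continuity_pt_comp (fun x => - f x / (beta+1)) exp).
  + unfold Rdiv. apply continuity_pt_mult. apply continuity_pt_opp. now apply cont_pt.
    apply continuity_pt_const. intros a b; reflexivity.
  + apply derivable_continuous_pt, derivable_pt_exp.
Qed.

Lemma Fint_pos beta f x : 0 < Fint beta f x.
Proof. apply exp_pos. Qed.

Lemma fp_up v (P : R * R -> Prop) : (forall b, v < b -> P (v, b)) ->
  filter_prod (at_point v) (Rbar_locally p_infty) P.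
Proof.
  intro H. apply (Filter_prod _ _ _ (fun a => a = v) (fun b => v < b)).
  - reflexivity.
  - exists v. auto.
  - intros a b -> Hb. now apply H.
Qed.

Lemma Fcal_is beta f v : (forall x, ex_derive f x) ->
  ex_RInt_gen (Fint beta f) (at_point 0) (Rbar_locally p_infty) ->
  is_RInt_gen (Fint beta f) (at_point v) (Rbar_locally p_infty) (Fcal beta f v).
Proof.
  intros Hd [l Hl].
  assert (HA : is_RInt_gen (Fint beta f) (at_point v) (at_point 0) (RInt (Fint beta f) v 0)).
  { apply is_RInt_gen_at_point. apply (RInt_correct (V:=R_CompleteNormedModule)), ex_RInt_continuous.
      intros z _. now apply Fint_cont. }
  pose proof (is_RInt_gen_Chasles _ _ _ _ HA Hl) as H1.
  unfold Fcal. rewrite (is_RInt_gen_unique _ _ H1). exact H1.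
Qed.

Lemma Fbounds beta f v c d : 0 < beta + 1 ->
  (forall x, ex_derive f x) -> (forall x, ex_derive (Derive f) x) ->
  (forall x, continuous (Derive (Derive f)) x) -> (forall x, 0 < Derive f x) ->
  ex_RInt_gen (Fint beta f) (at_point 0) (Rbar_locally p_infty) ->
  filterlim (hh beta f) (Rbar_locally p_infty) (locally 0) ->
  0 < c ->
  (forall x, v <= x -> c <= /(beta+1) + Derive (Derive f) x / (Derive f x)^2 <= d) ->
  c * Fcal beta f v <= hh beta f v /\ hh beta f v <= d * Fcal beta f v.
Proof.
  intros Hb H1 H2 H3 Hp Hex Hlim Hc Hq.
  set (e := fun x => - Fint beta f x * (/(beta+1) + Derive (Derive f) x / (Derive f x)^2)).
  assert (HD : forall x, Derive (hh beta f) x = e x).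
  { intro x. apply is_derive_unique, hh_deriv; auto. }
  assert (HI : is_RInt_gen (Derive (hh beta f)) (at_point v) (Rbar_locally p_infty) (0 - hh beta f v)).
  { apply is_RInt_gen_Derive.
    - apply fp_up. intros b _ x _. eexists. apply hh_deriv; auto.
    - apply fp_up. intros b _ x _. apply (continuous_ext e). intro; now rewrite HD.
      apply continuity_pt_filterlim, hh_expr_cont; auto.
    - intros P HP. exact (locally_singleton _ _ HP).
    - exact Hlim. }
  pose proof (Fcal_is beta f v H1 Hex) as HF.
  assert (P1 : forall x, v <= x -> norm (scal c (Fint beta f x)) <= opp (Derive (hh beta f) x)).
  { intros x Hx. change (Rabs (c * Fint beta f x) <= - Derive (hh beta f) x).
    rewrite HD. unfold e. pose proof (Fint_pos beta f x). specialize (Hq x Hx).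
    rewrite Rabs_pos_eq by nra. nra. }
  assert (P2 : forall x, v <= x -> norm (opp (Derive (hh beta f) x)) <= scal d (Fint beta f x)).
  { intros x Hx. change (Rabs (- Derive (hh beta f) x) <= d * Fint beta f x).
    rewrite HD. unfold e. pose proof (Fint_pos beta f x). specialize (Hq x Hx).
    rewrite Rabs_pos_eq by nra. nra. }
  assert (Q0 : filter_prod (at_point v) (Rbar_locally p_infty) (fun ab : R * R => fst ab <= snd ab)).
  { apply fp_up. intros b0 Hb0. simpl. lra. }
  assert (Q1 : filter_prod (at_point v) (Rbar_locally p_infty) (fun ab : R * R =>
     forall x : R, fst ab <= x <= snd ab -> norm (scal c (Fint beta f x)) <= opp (Derive (hh beta f) x))).
  { apply fp_up. intros b0 Hb0 x Hx. simpl in Hx. apply P1; lra. }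
  assert (Q2 : filter_prod (at_point v) (Rbar_locally p_infty) (fun ab : R * R =>
     forall x : R, fst ab <= x <= snd ab -> norm (opp (Derive (hh beta f) x)) <= scal d (Fint beta f x))).
  { apply fp_up. intros b0 Hb0 x Hx. simpl in Hx. apply P2; lra. }
  split.
  - assert (A := RInt_gen_norm (fun y => scal c (Fint beta f y)) (fun y => opp (Derive (hh beta f) y))
       _ _ Q0 Q1 (is_RInt_gen_scal _ c _ HF) (is_RInt_gen_opp _ _ HI)).
    change (Rabs (c * Fcal beta f v) <= - (0 - hh beta f v)) in A.
    pose proof (Rle_abs (c * Fcal beta f v)). lra.
  - assert (A := RInt_gen_norm (fun y => opp (Derive (hh beta f) y)) (fun y => scal d (Fint beta f y))
       _ _ Q0 Q2 (is_RInt_gen_opp _ _ HI) (is_RInt_gen_scal _ d _ HF)).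
    change (Rabs (- (0 - hh beta f v)) <= d * Fcal beta f v) in A.
    pose proof (Rle_abs (- (0 - hh beta f v))). lra.
Qed.



Lemma hh_lim beta f : (forall x, 0 < Derive f x) ->
  is_lim (fun x => exp (f x / (beta + 1)) / x) p_infty p_infty ->
  is_lim (fun x => x * Derive f x) p_infty p_infty ->
  filterlim (hh beta f) (Rbar_locally p_infty) (locally 0).
Proof.
  intros Hp H1 H2.
  assert (H : is_lim (fun x => / (exp (f x / (beta + 1)) / x) * / (x * Derive f x)) p_infty (Rbar_mult 0 0)).
  { apply is_lim_mult.
    - apply (is_lim_inv _ _ p_infty); [exact H1| discriminate].
    - apply (is_lim_inv _ _ p_infty); [exact H2| discriminate].
    - simpl. auto. }
  simpl in H. rewrite Rmult_0_l in H.
  apply (is_lim_ext_loc _ (hh beta f)) in H.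
  - exact H.
  - exists 0. intros x Hx. unfold hh. specialize (Hp x).
    assert (exp (f x / (beta+1)) > 0) by apply exp_pos.
    replace (- f x / (beta+1)) with (- (f x / (beta+1))) by (unfold Rdiv; ring).
    rewrite exp_Ropp. field. repeat split; lra.
Qed.






Lemma incr_of_pos (f : R -> R) :
  (forall x, ex_derive f x) -> (forall x, 0 < Derive f x) ->
  forall a b, a < b -> f a < f b.
Proof.
  intros Hd Hp a b Hab.
  destruct (MVT_gen f a b (Derive f)) as [c [Hc E]].
  - intros x _. apply Derive_correct, Hd.
  - intros x _. apply cont_pt, Hd.
  - specialize (Hp c). nra.
Qed.

Lemma surj (f : R -> R) : (forall x, ex_derive f x) -> (forall x, 0 < Derive f x) ->
  forall a b t, a < b -> f a < t < f b -> exists y, a < y < b /\ f y = t.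
Proof.
  intros Hd Hp a b t Hab Ht.
  assert (Hi := incr_of_pos f Hd Hp).
  destruct (IVT_gen f a b t) as [y [Hy Hfy]].
  - intro x. apply cont_pt, Hd.
  - rewrite Rmin_left, Rmax_right; try lra; apply Rlt_le, Hi, Hab.
  - rewrite Rmin_left, Rmax_right in Hy by lra.
    exists y. split; auto. split.
    + destruct (Req_dec y a); [subst; lra|lra].
    + destruct (Req_dec y b); [subst; lra|lra].
Qed.

Lemma g_cont (f g : R -> R) : (forall x, ex_derive f x) -> (forall x, 0 < Derive f x) ->
  (forall x, g (f x) = x) -> forall y, continuity_pt g (f y).
Proof.
  intros Hd Hp Hg y. apply continuity_pt_filterlim. apply filterlim_locally.
  intro eps. rewrite Hg.
  assert (Hi := incr_of_pos f Hd Hp).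
  set (e := eps / 2).
  assert (He : 0 < e) by (unfold e; destruct eps; simpl; lra).
  assert (H1 := Hi (y - e) y ltac:(lra)). assert (H2 := Hi y (y + e) ltac:(lra)).
  assert (Hdl : 0 < Rmin (f y - f (y - e)) (f (y + e) - f y)) by (apply Rmin_glb_lt; lra).
  exists (mkposreal _ Hdl). intros t Ht. apply ballR in Ht. simpl in Ht.
  pose proof (Rmin_l (f y - f (y - e)) (f (y + e) - f y)).
  pose proof (Rmin_r (f y - f (y - e)) (f (y + e) - f y)).
  apply Rabs_lt_between in Ht.
  change (minus t (f y)) with (t - f y) in Ht. destruct (surj f Hd Hp (y - e) (y + e) t ltac:(lra) ltac:(lra)) as [y' [Hy' <-]].
  apply ballR. rewrite Hg. apply Rabs_lt_between. unfold e in *. destruct eps; simpl in *. lra.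
Qed.

Lemma g_deriv (f g : R -> R) : (forall x, ex_derive f x) -> (forall x, 0 < Derive f x) ->
  (forall x, g (f x) = x) -> forall y, is_derive g (f y) (/ Derive f y).
Proof.
  intros Hd Hp Hg y.
  assert (Hi := incr_of_pos f Hd Hp).
  assert (Prf : forall a, g (f (y - 1)) <= a <= g (f (y + 1)) -> derivable_pt f a).
  { intros a _. exists (Derive f a). apply is_derive_Reals, Derive_correct, Hd. }
  assert (Hinc : g (f (y - 1)) <= g (f y) <= g (f (y + 1))) by (rewrite !Hg; lra).
  apply is_derive_Reals.
  pose proof (Ranalysis5.derivable_pt_lim_recip_interv f g (f (y - 1)) (f (y + 1)) (f y) Prf
    (g_cont f g Hd Hp Hg y) (Hi (y-1) (y+1) ltac:(lra)) (conj (Hi (y-1) y ltac:(lra)) (Hi y (y+1) ltac:(lra))) Hinc) as H.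
  rewrite Derive_Reals in H. rewrite Hg in H.
  replace (/ Derive f y) with (1 / Derive f y) by (field; specialize (Hp y); lra).
  apply H.
  - intros s Hs. unfold comp, id.
    destruct (Req_dec s (f (y-1))) as [->|N1]; [now rewrite Hg|].
    destruct (Req_dec s (f (y+1))) as [->|N2]; [now rewrite Hg|].
    destruct (surj f Hd Hp (y - 1) (y + 1) s ltac:(lra) ltac:(lra)) as [y' [_ <-]].
    now rewrite Hg.
  - specialize (Hp y). lra.
Qed.

Lemma g_second (f g : R -> R) : (forall x, ex_derive f x) -> (forall x, ex_derive (Derive f) x) ->
  (forall x, 0 < Derive f x) ->
  (forall x, g (f x) = x) -> forall y,
  Derive (Derive g) (f y) / Derive g (f y) = - (Derive (Derive f) y / (Derive f y)^2).
Proof.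
  intros Hd Hd2 Hp Hg y.
  assert (Hi := incr_of_pos f Hd Hp).
  assert (D1 : forall y, Derive g (f y) = / Derive f y) by (intro; apply is_derive_unique, g_deriv; auto).
  assert (E : Derive (Derive g) (f y) = Derive (fun t => / Derive f (g t)) (f y)).
  { apply Derive_ext_loc.
    assert (H1 := Hi (y - 1) y ltac:(lra)). assert (H2 := Hi y (y + 1) ltac:(lra)).
    assert (Hdl : 0 < Rmin (f y - f (y - 1)) (f (y + 1) - f y)) by (apply Rmin_glb_lt; lra).
    exists (mkposreal _ Hdl). intros t Ht. apply ballR in Ht. simpl in Ht.
    pose proof (Rmin_l (f y - f (y - 1)) (f (y + 1) - f y)).
    pose proof (Rmin_r (f y - f (y - 1)) (f (y + 1) - f y)).
    apply Rabs_lt_between in Ht. change (minus t (f y)) with (t - f y) in Ht.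
    destruct (surj f Hd Hp (y - 1) (y + 1) t ltac:(lra) ltac:(lra)) as [y' [_ <-]].
    now rewrite D1, Hg. }
  assert (Hdr : is_derive (fun t => / Derive f (g t)) (f y)
      (scal (/ Derive f y) (- Derive (Derive f) y / Derive f y ^ 2))).
  { apply (is_derive_comp (fun z => / Derive f z) g). 
    - rewrite Hg. apply is_derive_inv. apply Derive_correct, Hd2. specialize (Hp y); lra.
    - apply g_deriv; auto. }
  assert (E2 : Derive (Derive g) (f y) = (/ Derive f y) * (- Derive (Derive f) y / Derive f y ^ 2)).
  { rewrite E. apply is_derive_unique. exact Hdr. }
  rewrite E2, D1.
  specialize (Hp y). field. lra.
Qed.

Lemma q_lim (f g : R -> R) : (forall x, ex_derive f x) -> (forall x, ex_derive (Derive f) x) ->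
  (forall x, 0 < Derive f x) -> is_lim f p_infty p_infty ->
  (forall x, g (f x) = x) ->
  is_lim (fun t => Derive (Derive g) t / Derive g t) p_infty 0 ->
  is_lim (fun x => Derive (Derive f) x / (Derive f x)^2) p_infty 0.
Proof.
  intros Hd Hd2 Hp Hf Hg Hl.
  assert (H := is_lim_comp _ f p_infty 0 p_infty Hl Hf ltac:(exists 0; intros; discriminate)).
  apply is_lim_opp in H. simpl in H. rewrite Ropp_0 in H.
  eapply is_lim_ext; [|exact H]. intro y. simpl. rewrite (g_second f g Hd Hd2 Hp Hg y). apply Ropp_involutive.
Qed.






Definition Lim0 (m : R -> R) (L : R) :=
  forall eps, 0 < eps -> exists d, 0 < d /\ forall t, 0 < t < d -> Rabs (m t - L) < eps.

Lemma Lim0_of (m : R -> R) L : filterlim m (at_right 0) (locally L) -> Lim0 m L.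
Proof.
  intros H eps He. destruct (proj1 (filterlim_locally m L) H (mkposreal _ He)) as [d Hd].
  exists d. split. apply cond_pos. intros t Ht. apply (Hd t).
  apply ballR. rewrite Rminus_0_r, Rabs_pos_eq; lra. lra.
Qed.

Lemma Lim0_plus m1 m2 L1 L2 : Lim0 m1 L1 -> Lim0 m2 L2 -> Lim0 (fun t => m1 t + m2 t) (L1 + L2).
Proof.
  intros H1 H2 eps He. destruct (H1 (eps/2) ltac:(lra)) as [d1 [Hd1 P1]].
  destruct (H2 (eps/2) ltac:(lra)) as [d2 [Hd2 P2]].
  exists (Rmin d1 d2). split. now apply Rmin_glb_lt.
  intros t Ht. pose proof (Rmin_l d1 d2). pose proof (Rmin_r d1 d2).
  specialize (P1 t ltac:(lra)). specialize (P2 t ltac:(lra)).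
  apply Rabs_lt_between in P1. apply Rabs_lt_between in P2. apply Rabs_lt_between. lra.
Qed.

Lemma Lim0_opp m L : Lim0 m L -> Lim0 (fun t => - m t) (- L).
Proof.
  intros H eps He. destruct (H eps He) as [d [Hd P]]. exists d. split; auto.
  intros t Ht. specialize (P t Ht). replace (- m t - - L) with (- (m t - L)) by ring.
  now rewrite Rabs_Ropp.
Qed.

Lemma Lim0_ext m1 m2 L : (forall t, 0 < t -> m1 t = m2 t) -> Lim0 m1 L -> Lim0 m2 L.
Proof.
  intros E H eps He. destruct (H eps He) as [d [Hd P]]. exists d. split; auto.
  intros t Ht. rewrite <- E by lra. auto.
Qed.

Lemma Lim0_scal c m L : Lim0 m L -> Lim0 (fun t => c * m t) (c * L).
Proof.
  intros H eps He. destruct (H (eps / (Rabs c + 1))) as [d [Hd P]].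
  { apply Rdiv_lt_0_compat. lra. pose proof (Rabs_pos c). lra. }
  exists d. split; auto. intros t Ht. specialize (P t Ht).
  replace (c * m t - c * L) with (c * (m t - L)) by ring. rewrite Rabs_mult.
  pose proof (Rabs_pos c). pose proof (Rabs_pos (m t - L)).
  apply Rle_lt_trans with ((Rabs c + 1) * Rabs (m t - L)). nra.
  replace eps with ((Rabs c + 1) * (eps / (Rabs c + 1))) by (field; lra).
  apply Rmult_lt_compat_l; lra.
Qed.

Lemma Rpower_pos x y : 0 < Rpower x y.
Proof. apply exp_pos. Qed.

Lemma Rpower_1l y : Rpower 1 y = 1.
Proof. unfold Rpower. rewrite ln_1, Rmult_0_r. apply exp_0. Qed.

Lemma Lim0_Rpower a : 0 < a -> Lim0 (fun t => Rpower t a) 0.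
Proof.
  intros Ha eps He. exists (Rpower eps (/ a)). split. apply Rpower_pos.
  intros t Ht. rewrite Rminus_0_r, Rabs_pos_eq by (apply Rlt_le, Rpower_pos).
  replace eps with (Rpower (Rpower eps (/a)) a).
  apply Rlt_Rpower_l; lra.
  rewrite Rpower_mult, Rinv_l, Rpower_1; lra.
Qed.

Lemma mono0 (m dm : R -> R) (L r : R) : 0 < r ->
  (forall t, 0 < t <= r -> is_derive m t (dm t)) ->
  (forall t, 0 < t <= r -> 0 <= dm t) ->
  Lim0 m L -> L <= m r.
Proof.
  intros Hr Hd Hp Hl.
  assert (Hmt : forall t, 0 < t < r -> m t <= m r).
  { intros t Ht. destruct (MVT_gen m t r dm) as [c [Hc E]].
    - intros x Hx. apply Hd. rewrite Rmin_left in Hx by lra. rewrite Rmax_right in Hx by lra. lra.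
    - intros x Hx. rewrite Rmin_left in Hx by lra. rewrite Rmax_right in Hx by lra.
      apply cont_pt. eexists. apply Hd. lra.
    - rewrite Rmin_left in Hc by lra. rewrite Rmax_right in Hc by lra.
      assert (0 <= dm c) by (apply Hp; lra). nra. }
  apply Rnot_lt_le. intro Hlt.
  destruct (Hl (L - m r) ltac:(lra)) as [d [Hd' P]].
  set (t := Rmin (d/2) (r/2)).
  assert (Ht : 0 < t) by (unfold t; apply Rmin_glb_lt; lra).
  assert (t <= d/2) by apply Rmin_l. assert (t <= r/2) by apply Rmin_r.
  specialize (P t ltac:(lra)). apply Rabs_lt_between in P.
  specialize (Hmt t ltac:(lra)). lra.
Qed.



Lemma Rpower_succ x b : 0 < x -> Rpower x (b + 1) = Rpower x b * x.
Proof. intro. rewrite Rpower_plus, Rpower_1; auto. Qed.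

Lemma phi_neg beta x : x < 0 -> phi beta x = - Rpower (Rabs x) (beta + 1).
Proof.
  intro Hx. unfold phi. destruct (Req_EM_T x 0); [lra|].
  rewrite Rpower_succ by (apply Rabs_pos_lt; lra). rewrite Rabs_left by lra. ring.
Qed.

Lemma phi_pos beta x : 0 < x -> 0 < phi beta x.
Proof.
  intro Hx. unfold phi. destruct (Req_EM_T x 0); [lra|].
  pose proof (Rpower_pos (Rabs x) beta). nra.
Qed.

Lemma phi_small beta x : 0 < beta + 1 -> Rabs x <= 1 -> Rabs (phi beta x) <= 1.
Proof.
  intros Hb Hx. unfold phi. destruct (Req_EM_T x 0). rewrite Rabs_R0; lra.
  rewrite Rabs_mult, (Rabs_pos_eq (Rpower _ _)) by (apply Rlt_le, Rpower_pos).
  rewrite <- Rpower_succ by (apply Rabs_pos_lt; auto).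
  apply Rle_trans with (Rpower 1 (beta + 1)); [|rewrite Rpower_1l; lra].
  apply Rle_Rpower_l. lra. split; auto. apply Rabs_pos_lt; auto.
Qed.

Lemma ode_lower alpha beta gamma f rho u0 :
  (forall x, ex_derive f x) -> (forall x, 0 < Derive f x) ->
  beta + 1 < alpha -> 0 < beta + 1 -> 0 < theta alpha beta gamma ->
  is_solution alpha beta gamma f rho u0 ->
  forall r, 0 < r ->
  rho - Rpower (exp (f rho) / (gamma + 1)) (/ (beta + 1)) / (theta alpha beta gamma / (beta + 1))
        * Rpower r (theta alpha beta gamma / (beta + 1)) <= u0 r.
Proof.
  intros Hfd Hfp Hab Hb Hth [H0 [Hu [Hud [Hu' HW]]]] r Hr.
  unfold theta in *.
  assert (Hg1 : 0 < gamma + 1) by lra.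
  set (W := fun t => Rpower t alpha * phi beta (Derive u0 t)).
  set (E := exp (f rho)).
  apply Lim0_of in Hu. apply Lim0_of in Hu'.
  assert (HW0 : Lim0 W 0).
  { intros eps He. destruct (Hu' 1 ltac:(lra)) as [d1 [Hd1 P1]].
    destruct (Lim0_Rpower alpha ltac:(lra) eps He) as [d2 [Hd2 P2]].
    exists (Rmin d1 d2). split. now apply Rmin_glb_lt.
    intros t Ht. pose proof (Rmin_l d1 d2). pose proof (Rmin_r d1 d2).
    specialize (P1 t ltac:(lra)). specialize (P2 t ltac:(lra)).
    rewrite Rminus_0_r in *. unfold W. rewrite Rabs_mult.
    assert (Rabs (phi beta (Derive u0 t)) <= 1) by (apply phi_small; lra).
    pose proof (Rabs_pos (phi beta (Derive u0 t))). pose proof (Rabs_pos (Rpower t alpha)). nra. }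
  assert (HWn : forall t, 0 < t -> W t <= 0).
  { intros t Ht.
    assert (A := mono0 (fun t => - W t) (fun t => Rpower t gamma * exp (f (u0 t))) 0 t Ht).
    cut (0 <= - W t). lra. apply A.
    - intros s Hs. replace (Rpower s gamma * exp (f (u0 s))) with (- - (Rpower s gamma * exp (f (u0 s)))) by ring.
      apply (is_derive_opp W). apply HW. lra.
    - intros s _. apply Rlt_le, Rmult_lt_0_compat; [apply Rpower_pos | apply exp_pos].
    - pose proof (Lim0_opp _ _ HW0) as L. rewrite Ropp_0 in L. exact L. }
  assert (Hd : forall t, 0 < t -> is_derive u0 t (Derive u0 t)) by (intros; apply Derive_correct, Hud; auto).
  assert (Hu'n : forall t, 0 < t -> Derive u0 t <= 0).
  { intros t Ht. apply Rnot_lt_le. intro Hc. specialize (HWn t Ht). unfold W in HWn.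
    pose proof (phi_pos beta _ Hc). pose proof (Rpower_pos t alpha). nra. }
  assert (Hule : forall t, 0 < t -> u0 t <= rho).
  { intros t Ht. cut (- rho <= - u0 t). lra.
    apply (mono0 (fun t => - u0 t) (fun t => - Derive u0 t)); auto.
    - intros s Hs. apply (is_derive_opp u0), Hd. lra.
    - intros s Hs. specialize (Hu'n s ltac:(lra)). lra.
    - now apply Lim0_opp. }
  assert (Hfle : forall t, 0 < t -> f (u0 t) <= f rho).
  { intros t Ht. destruct (Rle_lt_or_eq_dec _ _ (Hule t Ht)) as [Hl|He].
    - apply Rlt_le, (incr_of_pos f Hfd Hfp); auto.
    - rewrite He; lra. }
  assert (HWl : forall t, 0 < t -> - (E / (gamma + 1)) * Rpower t (gamma + 1) <= W t).
  { intros t Ht. cut (0 <= W t + E / (gamma + 1) * Rpower t (gamma + 1)). lra.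
    replace 0 with (0 + E / (gamma + 1) * 0) by ring.
    apply (mono0 (fun t => W t + E / (gamma + 1) * Rpower t (gamma + 1))
       (fun t => - (Rpower t gamma * exp (f (u0 t))) + E * Rpower t gamma)); auto.
    - intros s Hs. apply (is_derive_plus W (fun t => E / (gamma + 1) * Rpower t (gamma + 1))). apply HW. lra.
      replace (E * Rpower s gamma) with (E / (gamma + 1) * ((gamma + 1) * Rpower s (gamma + 1 - 1))).
      apply (is_derive_scal (fun t => Rpower t (gamma + 1))). apply is_derive_Reals, derivable_pt_lim_power. lra.
      replace (gamma + 1 - 1) with gamma by ring. field. lra.
    - intros s Hs. pose proof (Rpower_pos s gamma).
      assert (exp (f (u0 s)) <= E). { unfold E. destruct (Rle_lt_or_eq_dec _ _ (Hfle s ltac:(lra))).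
        apply Rlt_le, exp_increasing; auto. rewrite e; lra. }
      nra.
    - apply Lim0_plus; auto. apply Lim0_scal, Lim0_Rpower. lra. }
  set (a := (gamma + 2 + beta - alpha) / (beta + 1)).
  assert (Ha : 0 < a) by (unfold a; apply Rdiv_lt_0_compat; lra).
  set (K := Rpower (E / (gamma + 1)) (/ (beta + 1))).
  assert (HE : 0 < E) by apply exp_pos.
  assert (HK : 0 < K) by apply Rpower_pos.
  assert (Hder : forall t, 0 < t -> - (K * Rpower t (a - 1)) <= Derive u0 t).
  { intros t Ht. pose proof (Rpower_pos t (a - 1)).
    destruct (Rle_lt_or_eq_dec _ _ (Hu'n t Ht)) as [Hx|Hx]; [|rewrite Hx; nra].
    set (x := Derive u0 t) in *.
    assert (Hax : 0 < Rabs x) by (apply Rabs_pos_lt; lra).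
    specialize (HWl t Ht). unfold W in HWl. fold x in HWl. rewrite phi_neg in HWl by auto.
    assert (S1 : Rpower (Rabs x) (beta + 1) <= E / (gamma + 1) * Rpower t (gamma + 1 - alpha)).
    { assert (H1 : Rpower t (gamma + 1) = Rpower t (gamma + 1 - alpha) * Rpower t alpha).
      { rewrite <- Rpower_plus. f_equal. ring. }
      rewrite H1 in HWl. pose proof (Rpower_pos t alpha).
      assert (Rpower t alpha * (Rpower (Rabs x) (beta + 1) - E / (gamma + 1) * Rpower t (gamma + 1 - alpha)) <= 0) by nra.
      assert (Rpower (Rabs x) (beta + 1) - E / (gamma + 1) * Rpower t (gamma + 1 - alpha) <= 0).
      { apply Rnot_lt_le. intro. assert (0 < Rpower t alpha * (Rpower (Rabs x) (beta + 1) - E / (gamma + 1) * Rpower t (gamma + 1 - alpha))) by (apply Rmult_lt_0_compat; lra). lra. }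
      lra. }
    assert (S2 : Rabs x <= K * Rpower t (a - 1)).
    { replace (Rabs x) with (Rpower (Rpower (Rabs x) (beta + 1)) (/ (beta + 1))).
      2:{ rewrite Rpower_mult, Rinv_r, Rpower_1; auto; lra. }
      unfold K. replace (a - 1) with ((gamma + 1 - alpha) * / (beta + 1)) by (unfold a; field; lra).
      rewrite <- Rpower_mult, Rpower_mult_distr.
      apply Rle_Rpower_l. apply Rlt_le, Rinv_0_lt_compat; lra.
      split; auto. apply Rpower_pos.
      apply Rdiv_lt_0_compat; lra. apply Rpower_pos. }
    rewrite Rabs_left in S2 by lra. lra. }
  assert (Hm : rho + K / a * 0 <= u0 r + K / a * Rpower r a).
  { apply (mono0 (fun t => u0 t + K / a * Rpower t a) (fun t => Derive u0 t + K / a * (a * Rpower t (a - 1)))); auto.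
    - intros s Hs. apply (is_derive_plus u0 (fun t => K / a * Rpower t a)). apply Hd; lra.
      apply (is_derive_scal (fun t => Rpower t a)). apply is_derive_Reals, derivable_pt_lim_power. lra.
    - intros s Hs. specialize (Hder s ltac:(lra)).
      replace (K / a * (a * Rpower s (a - 1))) with (K * Rpower s (a - 1)) by (field; lra). lra.
    - apply Lim0_plus; auto. apply Lim0_scal, Lim0_Rpower. lra. }
  fold E. fold K. fold a. lra.
Qed.


Theorem mainTheorem17 (alpha beta gamma : R) (f g : R -> R) (u : R -> R -> R) :
  (forall x, ex_derive f x) ->
  (forall x, ex_derive (Derive f) x) ->
  (forall x, continuous (Derive (Derive f)) x) ->
  (forall x, 0 < Derive f x) ->
  is_lim f p_infty p_infty ->
  is_lim (fun x => exp (f x / (beta + 1)) / x) p_infty p_infty ->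
  is_lim (fun x => x * Derive f x) p_infty p_infty ->
  beta + 1 < alpha -> 0 < beta + 1 -> 0 < theta alpha beta gamma ->
  ex_RInt_gen (Fint beta f) (at_point 0) (Rbar_locally p_infty) ->
  (forall x, g (f x) = x) ->
  is_lim (fun t => Derive (Derive g) t / Derive g t) p_infty 0 ->
  (forall rho, is_solution alpha beta gamma f rho (u rho)) ->
  forall S, 0 <= S ->
  forall eps, 0 < eps ->
  exists R0, forall rho, R0 < rho -> forall s, 0 <= s <= S ->
    Rabs (Ical beta f (u rho (eps_rho alpha beta gamma f rho * s)) - (beta + 1)) < eps.
Proof.
  intros Hd Hd2 Hc2 Hp Hf HB1 HB2 Hab Hb Hth Hex Hg Hgl Hsol S HS eps Heps.
  set (b := beta + 1) in *.
  set (dl := Rmin (1 / (2 * b)) (eps / (4 * (b * b)))).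
  assert (Hdl : 0 < dl) by (unfold dl; apply Rmin_glb_lt; apply Rdiv_lt_0_compat; nra).
  assert (Hdl1 : dl <= 1 / (2 * b)) by apply Rmin_l.
  assert (Hdl2 : dl <= eps / (4 * (b * b))) by apply Rmin_r.
  set (c := / b - dl). set (d := / b + dl).
  assert (Hc : 0 < c).
  { unfold c. assert (1 / (2 * b) < / b). { unfold Rdiv. rewrite Rinv_mult. pose proof (Rinv_0_lt_compat b Hb). lra. } lra. }
  assert (Hq := q_lim f g Hd Hd2 Hp Hf Hg Hgl).
  destruct (Hq (fun y => Rabs y < dl)) as [U HU].
  { exists (mkposreal dl Hdl). intros y Hy. apply ballR in Hy. replace y with (y - 0) by ring. exact Hy. }
  assert (Hhl := hh_lim beta f Hp HB1 HB2).
  assert (FB : forall v, U < v -> c * Fcal beta f v <= hh beta f v /\ hh beta f v <= d * Fcal beta f v).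
  { intros v Hv. apply Fbounds; auto. intros x Hx. specialize (HU x ltac:(lra)).
    apply Rabs_lt_between in HU. unfold c, d. fold b. lra. }
  assert (hpos : forall v, 0 < hh beta f v).
  { intro v. unfold hh. apply Rdiv_lt_0_compat. apply exp_pos. auto. }
  assert (Ihh : forall v, Ical beta f v * hh beta f v = Fcal beta f v).
  { intro v. unfold Ical, hh. fold b. specialize (Hp v).
    replace (- f v / b) with (- (f v / b)) by (unfold Rdiv; ring). rewrite exp_Ropp.
    assert (exp (f v / b) > 0) by apply exp_pos. field. lra. }
  assert (IB : forall v, U < v -> Rabs (Ical beta f v - b) < eps).
  { intros v Hv. destruct (FB v Hv) as [F1 F2]. specialize (Ihh v). specialize (hpos v).
    set (I := Ical beta f v) in *. set (h := hh beta f v) in *. set (F := Fcal beta f v) in *.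
    assert (HI1 : c * I <= 1).
    { rewrite <- Ihh in F1. assert (h * (c * I - 1) <= 0) by nra.
      apply Rnot_lt_le; intro. assert (0 < h * (c * I - 1)) by (apply Rmult_lt_0_compat; lra). lra. }
    assert (HI2 : 1 <= d * I).
    { rewrite <- Ihh in F2. assert (h * (1 - d * I) <= 0) by nra.
      apply Rnot_lt_le; intro. assert (0 < h * (1 - d * I)) by (apply Rmult_lt_0_compat; lra). lra. }
    unfold c, d in *.
    assert (bi : b * / b = 1) by (field; lra).
    assert (Hbd : b * dl <= 1/2) by (unfold Rdiv in Hdl1; rewrite Rinv_mult in Hdl1; nra).
    assert (Hbd2 : b * b * dl <= eps / 4).
    { apply Rle_trans with (b * b * (eps / (4 * (b * b)))). apply Rmult_le_compat_l; nra.
      right. field. lra. }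
    apply Rabs_lt_between. split.
    -
      assert (b * (/ b + dl) * I >= b) by nra.
      assert ((1 + b * dl) * I >= b) by nra.
      nra.
    - assert ((1 - b * dl) * I <= b) by nra.
      nra. }
  set (th := theta alpha beta gamma) in *.
  set (a := th / b).
  assert (Ha : 0 < a) by (unfold a; apply Rdiv_lt_0_compat; lra).
  set (K0 := Rpower (/ (gamma + 1)) (/ b)).
  set (F11 := Fcal1 beta 1).
  assert (HF11 : 0 < F11) by (unfold F11, Fcal1; fold b; apply Rmult_lt_0_compat; [lra|apply exp_pos]).
  set (C := K0 / a * Rpower S a / F11 / c).
  assert (HC : 0 < C).
  { unfold C. apply Rdiv_lt_0_compat; auto. apply Rdiv_lt_0_compat; auto.
    apply Rmult_lt_0_compat. apply Rdiv_lt_0_compat; auto. apply Rpower_pos. apply Rpower_pos. }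
  destruct (HB2 (fun y => 2 * C < y)) as [M HM]. { exists (2 * C). auto. }
  set (U1 := Rmax U 1).
  assert (HU1 : U <= U1) by apply Rmax_l. assert (HU2 : 1 <= U1) by apply Rmax_r.
  exists (Rmax (2 * U1) M). intros rho Hrho s Hs.
  assert (Hr1 : 2 * U1 < rho) by (eapply Rle_lt_trans; [apply Rmax_l|exact Hrho]).
  assert (Hr2 : M < rho) by (eapply Rle_lt_trans; [apply Rmax_r|exact Hrho]).
  destruct (Hsol rho) as [Hu0 _].
  destruct (Req_dec s 0) as [->|Hs0].
  { rewrite Rmult_0_r, Hu0. apply IB. lra. }
  destruct (FB rho ltac:(lra)) as [F1 F2].
  set (Fr := Fcal beta f rho) in *.
  assert (HFr : 0 < Fr).
  { specialize (hpos rho). assert (0 < d) by (unfold d; pose proof (Rinv_0_lt_compat b Hb); lra).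
    apply Rnot_le_lt. intro. nra. }
  set (ep := eps_rho alpha beta gamma f rho).
  assert (Hep : ep = Rpower (Fr / F11) (b / th)) by reflexivity.
  assert (Hep0 : 0 < ep) by (rewrite Hep; apply Rpower_pos).
  set (r := ep * s).
  assert (Hr : 0 < r) by (unfold r; apply Rmult_lt_0_compat; lra).
  assert (OL := ode_lower alpha beta gamma f rho (u rho) Hd Hp Hab Hb Hth (Hsol rho) r Hr).
  fold b th in OL. fold a in OL.
  assert (E1 : Rpower r a = Fr / F11 * Rpower s a).
  { unfold r. rewrite <- Rpower_mult_distr by lra. f_equal.
    rewrite Hep, Rpower_mult. replace (b / th * a) with 1 by (unfold a; field; lra).
    apply Rpower_1. apply Rdiv_lt_0_compat; auto. }
  assert (E2 : Rpower (exp (f rho) / (gamma + 1)) (/ b) = exp (f rho / b) * K0).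
  { unfold Rdiv at 1. rewrite <- Rpower_mult_distr. unfold K0. f_equal.
    unfold Rpower. rewrite ln_exp. f_equal. unfold Rdiv. ring.
    apply exp_pos. apply Rinv_0_lt_compat. clear -Hth Hab. unfold th, theta, b in *. lra. }
  rewrite E1, E2 in OL.
  assert (E3 : exp (f rho / b) * Fr <= / (c * Derive f rho)).
  { unfold hh in F1. fold b in F1. specialize (Hp rho).
    replace (- f rho / b) with (- (f rho / b)) in F1 by (unfold Rdiv; ring). rewrite exp_Ropp in F1.
    assert (Hx : 0 < exp (f rho / b)) by apply exp_pos.
    apply (Rmult_le_reg_l (c * Derive f rho)). apply Rmult_lt_0_compat; auto.
    rewrite Rinv_r by (apply Rgt_not_eq, Rmult_lt_0_compat; auto).
    apply (Rmult_le_compat_l (exp (f rho / b) * Derive f rho)) in F1; [|nra].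
    replace (exp (f rho / b) * Derive f rho * (/ exp (f rho / b) / Derive f rho)) with 1 in F1 by (field; lra).
    lra. }
  assert (E4 : Rpower s a <= Rpower S a) by (apply Rle_Rpower_l; lra).
  assert (E5 : rho - u rho r <= C / Derive f rho).
  { apply Rle_trans with (K0 / a * (exp (f rho / b) * Fr) / F11 * Rpower s a).
    - replace (K0 / a * (exp (f rho / b) * Fr) / F11 * Rpower s a) with
        (exp (f rho / b) * K0 / a * (Fr / F11 * Rpower s a)) by (field; lra). lra.
    - unfold C. specialize (Hp rho).
      assert (0 <= Rpower s a) by (apply Rlt_le, Rpower_pos).
      assert (0 < K0 / a) by (apply Rdiv_lt_0_compat; auto; apply Rpower_pos).
      apply Rle_trans with (K0 / a * (/ (c * Derive f rho)) / F11 * Rpower S a).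
      + unfold Rdiv. apply Rmult_le_compat; try nra.
        * apply Rmult_le_pos; [|apply Rlt_le, Rinv_0_lt_compat; auto].
          apply Rmult_le_pos. lra. apply Rmult_le_pos. apply Rlt_le, exp_pos. lra.
        * apply Rmult_le_compat_r. apply Rlt_le, Rinv_0_lt_compat; auto.
          apply Rmult_le_compat_l; lra.
      + right. field. split; lra. }
  assert (E6 : C / Derive f rho < rho / 2).
  { specialize (HM rho Hr2). specialize (Hp rho).
    apply (Rmult_lt_reg_r (Derive f rho)); auto. unfold Rdiv. rewrite Rmult_assoc, Rinv_l by lra. lra. }
  apply IB. lra.
Qed.
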